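(* Let $q=p^r$ with $p$ prime, $\theta(a)=a^{p^s}$ with $1\le s\le r-1$. Let $g(t)\in\mathbb{F}_q[t;\theta]$ have degree $k$ and be a right divisor of some monic polynomial of degree $n$ in $\mathbb{F}_q[t;\theta]$, and let $\mathscr{C}\subseteq\mathbb{F}_q^n$ be the skew $\theta$-module code generated by $g$, i.e. $\mathscr{C}=\{w\in\mathbb{F}_q[t;\theta]:\deg w<n,\ w=a(t)g(t)\text{ for some }a\}$. Let $\omega$ be a generator of $\mathbb{F}_{q^{[k]_s}}^*$. Suppose $$k\ge\log_{p^s}\Big[1+\Big(\frac{p^s-1}{r}\Big)\log_p\Big(\frac{(p^s)^n+p^s-2}{p^s-1}\Big)\Big],$$ and suppose there exist an integer $l\ge0$, an integer $c$ with $\gcd(c,q^{[k]_s}-1)=1$, and an integer $\Delta\ge2$ such that $g^{[]_s}(\omega^{l+ci})=0$ for $i=0,\dots,\Delta-2$. Then $d(\mathscr{C})\ge\Delta$.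
   Context: $\mathbb{F}_q[t;\theta]$ is the skew polynomial ring with $ta=\theta(a)t$; polynomials of degree $<n$ are identified with coefficient vectors in $\mathbb{F}_q^n$ and $d(\mathscr{C})$ is the minimum Hamming distance. For $i\ge0$, $[i]_s=\frac{(p^s)^i-1}{p^s-1}$. For $g(t)=\sum_ia_it^i$, $g^{[]_s}(x)=\sum_ia_ix^{[i]_s}\in\mathbb{F}_q[x]$ (commutative polynomial ring), evaluated at elements of the extension field $\mathbb{F}_{q^{[k]_s}}$. *)

(* Defs.v *)
From Stdlib Require Import Reals.
From HB Require Import structures.
From mathcomp Require Import all_boot all_order all_algebra all_field.
Set Implicit Arguments. Unset Strict Implicit. Unset Printing Implicit Defensive.
Import GRing.Theory.
Local Open Scope ring_scope.

Definition frob_theta (F : finFieldType) (p s : nat) (a : F) : F := a ^+ (p ^ s).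

(* Skew polynomials over F are represented by their coefficient sequences
   ({poly F}); multiplication in F[t;theta] with  t a = theta(a) t :
   (sum_i a_i t^i)(sum_j b_j t^j) = sum_{i,j} a_i theta^i(b_j) t^(i+j). *)
Definition skew_mul (F : finFieldType) (theta : F -> F) (u v : {poly F}) : {poly F} :=
  \poly_(m < (size u + size v).-1)
     \sum_(i < m.+1) u`_i * iter i theta (v`_(m - i)).

Definition qbracket (p s i : nat) : nat := ((p ^ s) ^ i - 1) %/ (p ^ s - 1).

Definition linearized_eval (F L : finFieldType) (f : {rmorphism F -> L})
  (p s : nat) (g : {poly F}) (x : L) : L :=
  \sum_(i < size g) f g`_i * x ^+ qbracket p s i.

Definition skew_code (F : finFieldType) (theta : F -> F) (n : nat) (g : {poly F})
  (w : {poly F}) : Prop :=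
  (size w <= n)%N /\ exists a : {poly F}, w = skew_mul theta a g.

Definition hamming (F : finFieldType) (n : nat) (w1 w2 : {poly F}) : nat :=
  #|[set i : 'I_n | w1`_i != w2`_i]|.

Definition min_dist_ge (F : finFieldType) (n : nat) (C : {poly F} -> Prop) (D : nat) : Prop :=
  forall w1 w2, C w1 -> C w2 -> w1 != w2 -> (D <= hamming n w1 w2)%N.

Local Close Scope ring_scope.

Definition k_lower_bound (p r s n : nat) : R :=
  Rdiv
    (ln (Rplus R1
       (Rmult (Rdiv (Rminus (INR (p ^ s)) R1) (INR r))
          (Rdiv (ln (Rdiv (Rminus (Rplus (INR ((p ^ s) ^ n)) (INR (p ^ s))) (IZR 2))
                          (Rminus (INR (p ^ s)) R1)))
                (ln (INR p))))))
    (ln (INR (p ^ s))).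

(* Main.v *)
Require Import Defs.
From Stdlib Require Import Reals Lra.
From HB Require Import structures.
From mathcomp Require Import all_boot all_order all_algebra all_field.
From mathcomp Require Import zify.
Import GRing.Theory.
Local Open Scope ring_scope.
Lemma qbracketE p s i : (1 < p ^ s)%N ->
  qbracket p s i = (\sum_(j < i) (p ^ s) ^ j)%N.
Proof.
move=> hP; rewrite /qbracket subn1 predn_exp subn1 mulKn //; lia.
Qed.

Section Real.
Local Open Scope R_scope.

Lemma INR_expn m e : INR (m ^ e)%N = INR m ^ e.
Proof. elim: e => [|e IH] //; by rewrite expnS -multE mult_INR IH. Qed.

Lemma INR_mul m e : INR (m * e)%N = INR m * INR e.
Proof. by rewrite -multE mult_INR. Qed.

Lemma ln_le_cancel x y : 0 < x -> 0 < y -> ln x <= ln y -> x <= y.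
Proof.
move=> hx hy h; destruct (Rle_or_lt x y) as [|h2] => //.
have := ln_increasing _ _ hy h2; lra.
Qed.

Lemma INR_pow_q p s e : (1 < p ^ s)%N ->
  INR ((p ^ s) ^ e)%N = INR (p ^ s).-1 * INR (qbracket p s e) + 1.
Proof.
move=> hP; have h : ((p ^ s) ^ e)%N = ((p ^ s).-1 * qbracket p s e + 1)%N.
  rewrite qbracketE // -predn_exp addn1 prednK // expn_gt0; lia.
by rewrite h -plusE plus_INR INR_mul.
Qed.

Lemma bound_nat p r s n k : prime p -> (1 <= s)%N -> (1 <= r)%N ->
  k_lower_bound p r s n <= INR k ->
  ((qbracket p s n).+1 <= (p ^ r) ^ qbracket p s k)%N.
Proof.
move=> pp hs hr hk.
have hp1 : (1 < p)%N by exact: prime_gt1.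
have hP : (1 < p ^ s)%N.
  by rewrite -{1}(expn0 p) ltn_exp2l.
set d := INR (p ^ s).-1.
have hd : 0 < d by apply: lt_0_INR; apply/ltP; lia.
have hPd : INR (p ^ s) = d + 1.
  by rewrite /d -{1}(prednK (ltnW hP)) S_INR.
set Qn := INR (qbracket p s n).
set Qk := INR (qbracket p s k).
have hQn : 0 <= Qn by apply: pos_INR.
have hQk : 0 <= Qk by apply: pos_INR.
have hpr : 1 < INR p by apply: lt_1_INR; apply/ltP.
have hrr : 0 < INR r by apply: lt_0_INR; apply/ltP; lia.
have lnp : 0 < ln (INR p) by rewrite -ln_1; apply: ln_increasing; lra.
have lnP : 0 < ln (d + 1) by rewrite -ln_1; apply: ln_increasing; lra.
have hA : (INR ((p ^ s) ^ n)%N + INR (p ^ s) - 2) / (INR (p ^ s) - 1) = Qn + 1.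
  rewrite INR_pow_q // hPd -/d -/Qn; field; lra.
move: hk; rewrite /k_lower_bound hA hPd.
have -> : (d + 1 - 1) = d by ring.
set Y := 1 + _.
have lnQ : 0 <= ln (Qn + 1).
  rewrite -ln_1; destruct (Req_dec Qn 0) as [->|hne]; first by rewrite Rplus_0_l; lra.
  by apply: Rlt_le; apply: ln_increasing; lra.
have hY : 1 <= Y.
  rewrite /Y; have : 0 <= d / INR r * (ln (Qn + 1) / ln (INR p)).
    apply: Rmult_le_pos; apply: Rmult_le_pos => //; try lra.
      by apply: Rlt_le; apply: Rinv_0_lt_compat.
    by apply: Rlt_le; apply: Rinv_0_lt_compat.
  lra.
move=> hk.
have h1 : ln Y <= ln ((d + 1) ^ k).
  rewrite ln_pow; last lra.
  have -> : ln Y = ln Y / ln (d + 1) * ln (d + 1) by field; lra.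
  by apply: Rmult_le_compat_r; lra.
have h2 : Y <= (d + 1) ^ k.
  apply: ln_le_cancel => //; first lra.
  by apply: pow_lt; lra.
have h3 : (d + 1) ^ k = d * Qk + 1.
  by rewrite -hPd -INR_expn INR_pow_q.
have h4 : ln (Qn + 1) <= INR r * Qk * ln (INR p).
  rewrite /Y h3 in h2.
  have h5 : d * (ln (Qn + 1) / (INR r * ln (INR p))) <= d * Qk.
    have -> : d * (ln (Qn + 1) / (INR r * ln (INR p))) =
      d / INR r * (ln (Qn + 1) / ln (INR p)) by field; lra.
    lra.
  have h6 : ln (Qn + 1) / (INR r * ln (INR p)) <= Qk.
    by apply: (Rmult_le_reg_l d) => //.
  have hZ : ln (Qn + 1) = ln (Qn + 1) / (INR r * ln (INR p)) * (INR r * ln (INR p))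
    by field; lra.
  move: h6; set Z := ln (Qn + 1) / (INR r * ln (INR p)) => h6.
  rewrite hZ -/Z.
  have hpos : 0 <= INR r * ln (INR p) by apply: Rmult_le_pos; lra.
  have := Rmult_le_compat_r _ _ _ hpos h6.
  move=> hh.
nra.
have h7 : Qn + 1 <= INR ((p ^ r) ^ qbracket p s k)%N.
  rewrite -expnM INR_expn; apply: ln_le_cancel; first lra.
    by apply: pow_lt; lra.
  by rewrite ln_pow ?INR_mul -/Qk; lra.
have : INR (qbracket p s n).+1 <= INR ((p ^ r) ^ qbracket p s k)%N.
  by rewrite S_INR.
by move/INR_le/leP.
Qed.
End Real.

From mathcomp Require Import ring.

Lemma qbracketD p s i j : (1 < p ^ s)%N ->
  qbracket p s (i + j) = (qbracket p s i + (p ^ s) ^ i * qbracket p s j)%N.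
Proof.
move=> hP; rewrite !qbracketE // big_split_ord /=; congr (_ + _)%N.
rewrite big_distrr /=; apply: eq_bigr => m _; by rewrite expnD.
Qed.

Lemma qbracketS p s j : (1 < p ^ s)%N ->
  qbracket p s j.+1 = (qbracket p s j + (p ^ s) ^ j)%N.
Proof.
move=> hP; rewrite -addn1 qbracketD // (qbracketE _ _ 1) // big_ord1 muln1 //.
Qed.

Lemma qbracket_lt p s i j : (1 < p ^ s)%N -> (i < j)%N ->
  (qbracket p s i < qbracket p s j)%N.
Proof.
move=> hP; have h0 : forall e, (0 < (p^s)^e)%N by move=> e; rewrite expn_gt0; lia.
elim: j => // j IH; rewrite ltnS leq_eqVlt => /orP[/eqP->|/IH h].
  by rewrite qbracketS //; have := h0 j; lia.
apply: (ltn_trans h); rewrite qbracketS //; have := h0 j; lia.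
Qed.

Lemma vander0 (K : fieldType) (I : finType) (z u : I -> K) (J : {set I}) :
  {in J &, injective z} ->
  (forall t, (t < #|J|)%N -> \sum_(j in J) u j * z j ^+ t = 0) ->
  forall j, j \in J -> u j = 0.
Proof.
move: {2}#|J| (erefl #|J|) => m; elim: m J u => [|m IH] J u hJ inj hs.
  by move=> j hj; move/eqP: hJ; rewrite cards_eq0 => /eqP hJ; rewrite hJ inE in hj.
have [j0 hj0] : exists j0, j0 \in J.
  by apply/set0Pn; rewrite -card_gt0 hJ.
pose u' j := u j * (z j - z j0).
have hJ' : #|J :\ j0| = m by move: hJ; rewrite (cardsD1 j0 J) hj0 add1n => -[].
have inj' : {in J :\ j0 &, injective z}.
  by move=> x y; rewrite !inE => /andP[_ hx] /andP[_ hy]; apply: inj.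
have hs' : forall t, (t < #|J :\ j0|)%N -> \sum_(j in J :\ j0) u' j * z j ^+ t = 0.
  move=> t; rewrite hJ' => ht.
  have -> : \sum_(j in J :\ j0) u' j * z j ^+ t = \sum_(j in J) u' j * z j ^+ t.
    rewrite [in RHS](bigD1 j0) //= /u' subrr mulr0 mul0r add0r.
    by apply: eq_bigl => j; rewrite !inE andbC.
  have -> : \sum_(j in J) u' j * z j ^+ t =
     \sum_(j in J) u j * z j ^+ t.+1 - z j0 * \sum_(j in J) u j * z j ^+ t.
    rewrite mulr_sumr -sumrB; apply: eq_bigr => j _; rewrite /u' exprS; ring.
  by rewrite !hs ?hJ // ?mulr0 ?subrr //; lia.
have h1 : forall j, j \in J -> j != j0 -> u j = 0.
  move=> j hj hne; have := IH _ u' hJ' inj' hs' j; rewrite !inE hne hj => /(_ isT).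
  move/eqP; rewrite /u' mulf_eq0 subr_eq0 => /orP[/eqP//|/eqP hz].
  by move: hne; rewrite (inj _ _ hj hj0 hz) eqxx.
move=> j hj; have := hs 0%N; rewrite hJ => /(_ isT).
rewrite (bigD1 j0) //= big1 ?addr0 ?expr0 ?mulr1; last first.
  by move=> i /andP[hi hne]; rewrite h1 ?mul0r.
move=> h0; case: (eqVneq j j0) => [->//|hne]; exact: h1.
Qed.

Lemma tri (R : zmodType) (f : nat -> nat -> R) N :
  \sum_(m < N) \sum_(i < m.+1) f i (m - i)%N = \sum_(i < N) \sum_(j < N - i) f i j.
Proof.
elim: N => [|N IH]; first by rewrite !big_ord0.
rewrite big_ord_recr /= IH.
have -> : \sum_(i < N.+1) \sum_(j < N.+1 - i) f i j =
   \sum_(i < N.+1) (\sum_(j < N - i) f i j + f i (N - i)%N).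
  apply: eq_bigr => i _; have hi := ltn_ord i.
  have -> : (N.+1 - i = (N - i).+1)%N by lia.
  by rewrite big_ord_recr.
rewrite big_split /= [in RHS]big_ord_recr /= subnn big_ord0 addr0.
by [].
Qed.

Section Alg.
Variables (F L : finFieldType) (emb : {rmorphism F -> L}) (p s : nat).
Hypothesis pcharL : p \in [pchar L].
Hypothesis hP : (1 < p ^ s)%N.

Lemma frob_add e (x y : L) : (x + y) ^+ (p ^ e) = x ^+ (p ^ e) + y ^+ (p ^ e).
Proof.
apply: exprDn_pchar; rewrite pnatX (pnatE _ (pcharf_prime pcharL)) pcharL //.
Qed.

Lemma frob_sum e (I : Type) (r : seq I) (Pr : pred I) (f : I -> L) :
  (\sum_(i <- r | Pr i) f i) ^+ (p ^ e) = \sum_(i <- r | Pr i) f i ^+ (p ^ e).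
Proof.
apply: (big_morph (fun x => x ^+ (p ^ e))); first exact: frob_add.
rewrite expr0n; case: eqP => //; have := expn_gt0 p e.
by rewrite (prime_gt0 (pcharf_prime pcharL)) => /= h h2; rewrite h2 in h.
Qed.

Lemma iter_frob i (x : F) : iter i (frob_theta p s) x = x ^+ ((p ^ s) ^ i).
Proof.
elim: i => [|i IH] /=; first by rewrite expr1.
by rewrite IH /frob_theta -exprM expnSr.
Qed.

Lemma iter_frob0 i : iter i (@frob_theta F p s) 0 = 0.
Proof. by rewrite iter_frob expr0n expn_eq0; case: eqP => //; lia. Qed.

Lemma coef_skew (u v : {poly F}) m :
  (skew_mul (frob_theta p s) u v)`_m =
  \sum_(i < m.+1) u`_i * iter i (frob_theta p s) (v`_(m - i)).
Proof.
rewrite /skew_mul coef_poly; case: ltnP => // hm.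
rewrite big1 // => i _.
case: (ltnP i (size u)) => hi.
  rewrite [v`_ _]nth_default ?iter_frob0 ?mulr0 //.
  move: hm hi; case: i => i0 hi0 /=; rewrite -subn1; lia.
by rewrite nth_default ?mul0r.
Qed.

Definition Phi N (w : {poly F}) (b : L) := \sum_(m < N) emb w`_m * b ^+ qbracket p s m.

Lemma Phi_ext N (w : {poly F}) (b : L) : (size w <= N)%N -> Phi N w b = Phi (size w) w b.
Proof.
move=> hN; rewrite /Phi [RHS](big_ord_widen N (fun m => emb w`_m * b ^+ qbracket p s m) hN).
rewrite [RHS]big_mkcond /=; apply: eq_bigr => i _; case: ltnP => // hi.
by rewrite nth_default // rmorph0 mul0r.
Qed.

Lemma Phi_skew (a g : {poly F}) (b : L) N : linearized_eval emb p s g b = 0 ->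
  (size a + size g <= N)%N -> Phi N (skew_mul (frob_theta p s) a g) b = 0.
Proof.
move=> hg hN; rewrite /Phi.
under eq_bigr => m _ do rewrite coef_skew rmorph_sum mulr_suml.
pose f := (fun i j => emb (a`_i * iter i (frob_theta p s) g`_j) *
                 b ^+ qbracket p s (i + j)).
transitivity (\sum_(m < N) \sum_(i < m.+1) f i (m - i)%N).
  apply: eq_bigr => m _; apply: eq_bigr => i _; rewrite /f.
  have hi := ltn_ord i; have -> : (i + (m - i))%N = m by lia.
  by [].
rewrite (@tri L f).
rewrite big1 // => i _.
case: (ltnP i (size a)) => hi; last first.
  by apply: big1 => j _; rewrite /f [a`_i]nth_default // mul0r rmorph0 mul0r.
transitivity (emb a`_i * b ^+ qbracket p s i *
   (Phi (N - i) g b) ^+ ((p ^ s) ^ i)).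
  rewrite /Phi -expnM frob_sum mulr_sumr; apply: eq_bigr => j _.
  rewrite /f rmorphM iter_frob rmorphXn qbracketD // exprD exprMn -!exprM expnM.
  rewrite [(_ * qbracket _ _ _)%N]mulnC; ring.
rewrite Phi_ext; last by lia.
have -> : Phi (size g) g b = 0 by exact: hg.
by rewrite expr0n expn_eq0; case: eqP; [lia | rewrite mulr0].

Qed.
End Alg.
Arguments Phi {F L} emb p s N w b.
Arguments Phi_ext {F L} emb p s N w b.
Arguments Phi_skew {F L} emb p s pcharL hP a g b N.




Theorem mainTheorem11
  (p r s : nat) (F : finFieldType)
  (hp : prime p) (hq : #|F| = (p ^ r)%N)
  (hs1 : (1 <= s)%N) (hs2 : (s <= r - 1)%N)
  (n k : nat) (g : {poly F})
  (hdeg : size g = k.+1)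
  (hdiv : exists h fpol : {poly F},
            fpol \is monic /\ size fpol = n.+1 /\
            fpol = skew_mul (frob_theta p s) h g)
  (L : finFieldType) (emb : {rmorphism F -> L})
  (hL : #|L| = (#|F| ^ qbracket p s k)%N)
  (omega : L) (homega : (#|L|).-1.-primitive_root omega)
  (hk : Rle (k_lower_bound p r s n) (INR k))
  (l : nat) (c : int) (Delta : nat)
  (hc : coprimez c ((#|F| ^ qbracket p s k).-1)%:Z)
  (hDelta : (2 <= Delta)%N)
  (hroots : forall i : nat, (i <= Delta - 2)%N ->
     linearized_eval emb p s g (omega ^ (l%:Z + c * i%:Z)) = 0) :
  min_dist_ge n (skew_code (frob_theta p s) n g) Delta.
Proof.
have hp1 := prime_gt1 hp.
have hP : (1 < p ^ s)%N by rewrite -{1}(expn0 p) ltn_exp2l.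
have pcharF : p \in [pchar F] := card_finPcharP hq hp.
have pcharL : p \in [pchar L] := rmorph_pchar emb pcharF.
have hN : #|L|.-1 = (#|F| ^ qbracket p s k).-1 by rewrite hL.
have hb := @bound_nat p r s n k hp hs1 (_ : (1 <= r)%N) hk.
have {hb} hbound : (qbracket p s n <= #|L|.-1)%N.
  move: hb; rewrite hN -hq; set X := (#|F| ^ _)%N; lia.
have hN0 := prim_order_gt0 homega.
have om0 : omega != 0.
  apply/negP => /eqP h0; have := prim_expr_order homega.
  by rewrite h0 expr0n; case: eqP => [|_ /eqP]; [lia | rewrite eq_sym oner_eq0].
move=> w1 w2 [sz1 [a1 e1]] [sz2 [a2 e2]] hne.
set w := w1 - w2.
have Pw : forall (wi ai : {poly F}) (b : L), (size wi <= n)%N ->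
    wi = skew_mul (frob_theta p s) ai g -> linearized_eval emb p s g b = 0 ->
    Phi emb p s n wi b = 0.
  move=> wi ai b hsz hwi hgb; rewrite Phi_ext // -(Phi_ext emb p s (size ai + size g + n)).
    by rewrite hwi; apply: (Phi_skew emb p s pcharL hP) => //; lia.
  lia.
have Phi0 : forall t, (t <= Delta - 2)%N ->
    Phi emb p s n w (omega ^ (l%:Z + c * t%:Z)) = 0.
  move=> t ht; have hg := hroots t ht.
  have -> : Phi emb p s n w (omega ^ (l%:Z + c * t%:Z)) =
     Phi emb p s n w1 (omega ^ (l%:Z + c * t%:Z)) -
     Phi emb p s n w2 (omega ^ (l%:Z + c * t%:Z)).
    rewrite /Phi -sumrB; apply: eq_bigr => m _; by rewrite /w coefB rmorphB mulrBl.
  by rewrite (Pw _ a1) // (Pw _ a2) // subrr.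
rewrite /hamming leqNgt; apply/negP => hlt.
set J := [set i : 'I_n | w1`_i != w2`_i].
pose u (m : 'I_n) := emb w`_m * (omega ^+ l) ^+ qbracket p s m.
pose z (m : 'I_n) := (omega ^ c) ^+ qbracket p s m.
have hsum : forall t, (t < #|J|)%N -> \sum_(j in J) u j * z j ^+ t = 0.
  move=> t ht; have ht2 : (t <= Delta - 2)%N.
  move: ht hlt; rewrite -/J. lia.
  rewrite -[RHS](Phi0 t ht2) /Phi [LHS]big_mkcond /=; apply: eq_bigr => m _.
  rewrite inE; case: ifP => hm.
    rewrite /u /z expfzDr // -exprnP -exprz_exp -exprnP exprMn mulrA.
    by congr (_ * _); exact: exprAC.
  move/negbT: hm; rewrite negbK => /eqP hm.
  by rewrite /w coefB hm subrr rmorph0 mul0r.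
have hc' : coprime `|c|%N #|L|.-1 by rewrite hN; exact: hc.
have key : forall d, (0 < d < #|L|.-1)%N -> (omega ^ c) ^+ d != 1.
  move=> d hd; apply/negP => /eqP h1.
  have h2 : (omega ^+ `|c|%N) ^+ d = 1.
    move: h1; case: (c) => [m|m] /=; first by rewrite -exprnP.
    by rewrite exprVn => /eqP; rewrite invr_eq1 => /eqP.
  move: h2; rewrite -exprM => /eqP; rewrite -(prim_order_dvd homega).
  rewrite Gauss_dvdr; last by rewrite coprime_sym.
  move/dvdn_leq; lia.
have zu : forall m, z m \is a GRing.unit.
  by move=> m; rewrite unitfE expf_neq0 // expfz_neq0.
have inj : {in J &, injective z}.
  move=> i j _ _ hz; apply/val_inj/eqP; apply/negP => hij.
  have hi := ltn_ord i; have hj := ltn_ord j.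
  have hq1 : forall x, (x < n)%N -> (qbracket p s x < #|L|.-1)%N.
    move=> x hx; apply: (leq_trans _ hbound); exact: qbracket_lt.
  case: (ltngtP i j) hij => // hlt2 _.
    have hlt3 := @qbracket_lt p s _ _ hP hlt2.
    have hd : (0 < qbracket p s j - qbracket p s i < #|L|.-1)%N.
      by have := hq1 _ hj; lia.
    have h : (omega ^ c) ^+ (qbracket p s j - qbracket p s i) * z i = z j.
      by rewrite /z -exprD subnK // ltnW.
    have h1 : (omega ^ c) ^+ (qbracket p s j - qbracket p s i) = 1.
      by apply: (mulIr (zu i)); rewrite mul1r h hz.
    by have := key _ hd; rewrite h1 eqxx.
  have hlt3 := @qbracket_lt p s _ _ hP hlt2.
  have hd : (0 < qbracket p s i - qbracket p s j < #|L|.-1)%N.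
    by have := hq1 _ hi; lia.
  have h : (omega ^ c) ^+ (qbracket p s i - qbracket p s j) * z j = z i.
    by rewrite /z -exprD subnK // ltnW.
  have h1 : (omega ^ c) ^+ (qbracket p s i - qbracket p s j) = 1.
    by apply: (mulIr (zu j)); rewrite mul1r h hz.
  by have := key _ hd; rewrite h1 eqxx.
case: (pickP [pred i : 'I_n | w1`_i != w2`_i]) => [i hi | hnone]; last first.
  apply: (negP hne); apply/eqP/polyP => m; case: (ltnP m n) => hm.
    by have := hnone (Ordinal hm); move/negbT; rewrite negbK => /eqP.
  by rewrite !nth_default // (leq_trans _ hm).
have hiJ : i \in J by rewrite inE.
have := @vander0 L _ z u J inj hsum i hiJ; move/eqP; rewrite /u mulf_eq0 fmorph_eq0 expf_eq0 expf_eq0.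
rewrite (negbTE om0) !andbF orbF /w coefB subr_eq0.
by rewrite (negbTE hi).
Qed.
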